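(* Let $(\mathbf{P},d_{\mathbf{P}})$ be a finite metric poset and let $M,N$ be $\mathbf{P}$-modules. Then \[ \mathrm{dist}_{\mathrm{B}}\bigl(K^M_\bullet,K^N_\bullet\bigr)\ \le\ d^{\mathrm{Int}\overline{\mathbf{P}}}_{\mathrm{GT}}\bigl(K(M),K(N)\bigr)\ \le\ d^{\mathbf{P}}_{\mathrm{GT}}(M,N), \] where $K^M_\bullet$ and $K^N_\bullet$ are minimal projective resolutions of $K(M)$ and $K(N)$ in $\mathrm{vect}^{\mathrm{Int}\overline{\mathbf{P}}}$, and $\mathrm{dist}_{\mathrm{B}}$ is computed over the finite (extended) metric poset $(\mathrm{Int}\overline{\mathbf{P}},d_{\mathrm{Int}\overline{\mathbf{P}}})$.
   Context: Fix a field $k$; $\mathrm{vect}$ is the category of finite-dimensional $k$-vector spaces. Finite posets are categories with a unique morphism $x\to y$ iff $x\le y$; for a finite poset $\mathbf{S}$, an $\mathbf{S}$-module is a functor $\mathbf{S}\to\mathrm{vect}$, forming $\mathrm{vect}^{\mathbf{S}}$. For monotone $g$, $g^*$ is precomposition with $g$. A finite (extended) metric poset is a finite poset $\mathbf{S}$ with a (possibly extended, $[0,\infty]$-valued) metric $d_{\mathbf{S}}$. Augmentation and intervals: $\overline{\mathbf{P}}=\mathbf{P}\sqcup\{\top\}$ with $x<\top$ for all $x\in\mathbf{P}$; $d_{\overline{\mathbf{P}}}$ extends $d_{\mathbf{P}}$ by $d(x,\top)=d(\top,x)=\infty$ for $x\ne\top$, $d(\top,\top)=0$. For a finite poset $\mathbf{S}$,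 $\mathrm{Int}\,\mathbf{S}=\{(x,y)\in\mathbf{S}\times\mathbf{S}\mid x\le y\}$ with the product order and metric $d_{\mathrm{Int}\mathbf{S}}((x_1,y_1),(x_2,y_2))=\max\{d_{\mathbf{S}}(x_1,x_2),d_{\mathbf{S}}(y_1,y_2)\}$. For $M\in\mathrm{vect}^{\mathbf{P}}$, $\overline{M}\in\mathrm{vect}^{\overline{\mathbf{P}}}$ extends $M$ by $\overline{M}(\top)=0$. The kernel module $K(M)\in\mathrm{vect}^{\mathrm{Int}\overline{\mathbf{P}}}$ is $K(M)((x,y))=\ker\overline{M}(x\le y)$, with structure map for $(x_1,y_1)\le(x_2,y_2)$ the restriction of $\overline{M}(x_1\le x_2)$. Galois transport: a Galois insertion $f:\mathbf{Q}\rightleftarrows\mathbf{S}:g$ consists of monotone $f,g$ with $f(u)\le x\iff u\le g(x)$ and $f\circ g=\mathrm{id}_{\mathbf{S}}$. A Galois coupling of $(M,N)$ ($M,N\in\mathrm{vect}^{\mathbf{S}}$) is $(\mathbf{Q},f\dashv g,h\dashv i,\Gamma)$ with $\mathbf{Q}$ a finite poset, $f:\mathbf{Q}\rightleftarrows\mathbf{S}:g$, $h:\mathbf{Q}\rightleftarrows\mathbf{S}:i$ Galois insertions, $\Gamma\in\mathrm{vect}^{\mathbf{Q}}$, $g^*\Gamma\cong M$, $i^*\Gamma\cong N$; cost $=\sup_{q\in\mathbf{Q}}d_{\mathbf{S}}(f(q),h(q))$. $d^{\mathbf{S}}_{\mathrm{GT}}(M,N)$ is the infimum of costs of couplings ($\infty$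 if none). Bottleneck distance over $\mathbf{S}$: $k[\mathbf{S}]_x$ ($x\in\mathbf{S}$) is the module with value $k$ at $y\ge x$, $0$ elsewhere, identity maps; these are the indecomposable projectives. For $y\le x$, $\rho(x\ge y):k[\mathbf{S}]_x\to k[\mathbf{S}]_y$ is the canonical nonzero morphism (identity at each $z\ge x$), and $\rho(x\ge y)=0$ otherwise. A morphism between projectives $E=\bigoplus_{x\in\mathrm{smd}(E)}k[\mathbf{S}]_x\to F=\bigoplus_{y\in\mathrm{smd}(F)}k[\mathbf{S}]_y$ (given decompositions) is uniquely $[a_{x,y}\rho(x\ge y)]$ with $a_{x,y}\in k$, $a_{x,y}=0$ unless $x\ge y$; $\mathrm{Mat}$ is $[a_{x,y}]$. Projective resolutions $E_\bullet=(E_i,\partial_i:E_{i+1}\to E_i)_{i\ge0}$ are taken with fixed decompositions of each $E_i$; $|E_i|$ = number of summands. $\mathsf{Res}(P^M_\bullet,P^N_\bullet)$ = pairs of projective resolutions $(E_\bullet,F_\bullet)$ of $M,N$ with $|E_i|=|F_i|$ for all $i$. A matching is a family of bijections $B_i:\mathrm{smd}(E_i)\to\mathrm{smd}(F_i)$ with the $(x',x)$-entry of $\mathrm{Mat}(\partial^E_i)$ equal to the $(B_{i+1}(x'),B_i(x))$-entry of $\mathrm{Mat}(\partial^F_i)$ for all $i$, $x\in\mathrm{smd}(E_i)$, $x'\in\mathrm{smd}(E_{i+1})$; cost $=\sup_{i,x}d_{\mathbf{S}}(x,B_i(x))$. $\mathrm{dist}_{\mathrm{R}}(E_\bullet,F_\bullet)$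 = inf cost over matchings ($\infty$ if none); $\mathrm{dist}_{\mathrm{B}}(P^M_\bullet,P^N_\bullet)$ = inf of $\mathrm{dist}_{\mathrm{R}}$ over $\mathsf{Res}(P^M_\bullet,P^N_\bullet)$ ($\infty$ if empty), where $P^M_\bullet$ is a minimal projective resolution. *)

(* Defs.v *)
From HB Require Import structures.
From mathcomp Require Import all_boot all_order all_algebra.
From mathcomp Require Import classical_sets reals constructive_ereal ereal.

Set Implicit Arguments.
Unset Strict Implicit.
Unset Printing Implicit Defensive.

Import Order.TTheory GRing.Theory Num.Theory.
Local Open Scope ring_scope.

Record finPoset := FinPoset {
  pcar :> finType;
  ple : rel pcar;
  ple_refl : reflexive ple;
  ple_anti : antisymmetric ple;
  ple_trans : transitive ple }.

Definition monotone (Q S : finPoset) (f : Q -> S) :=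
  forall u v : Q, ple u v -> ple (f u) (f v).

Definition galois_ins (Q S : finPoset) (f : Q -> S) (g : S -> Q) :=
  [/\ monotone f, monotone g,
      (forall (u : Q) (x : S), ple (f u) x = ple u (g x))
    & (forall x : S, f (g x) = x)].

(* Augmentation  P-bar = P + {top}, top encoded as None. *)
Definition aug_le (P : finPoset) (a b : option P) : bool :=
  match a, b with
  | Some x, Some y => ple x y
  | _, None => true
  | None, Some _ => false
  end.

Lemma aug_le_refl (P : finPoset) : reflexive (@aug_le P).
Proof. by case=> //= x; apply: ple_refl. Qed.

Lemma aug_le_anti (P : finPoset) : antisymmetric (@aug_le P).
Proof.
case=> [x|] [y|] //= h.
by rewrite (ple_anti h).
Qed.

Lemma aug_le_trans (P : finPoset) : transitive (@aug_le P).
Proof.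
case=> [y|] [x|] [z|] //=; exact: ple_trans.
Qed.

Definition augP (P : finPoset) : finPoset :=
  @FinPoset (option P : finType) (@aug_le P)
    (@aug_le_refl P) (@aug_le_anti P) (@aug_le_trans P).

Definition int_car (S : finPoset) : finType := {p : S * S | ple p.1 p.2}.

Definition int_le (S : finPoset) (a b : int_car S) : bool :=
  ple (val a).1 (val b).1 && ple (val a).2 (val b).2.

Lemma int_le_refl (S : finPoset) : reflexive (@int_le S).
Proof. by move=> a; rewrite /int_le !ple_refl. Qed.

Lemma int_le_anti (S : finPoset) : antisymmetric (@int_le S).
Proof.
move=> [[x1 y1] h1] [[x2 y2] h2]; rewrite /int_le /=.
case/andP=> /andP[a b] /andP[c e]; apply: val_inj => /=.
by rewrite (ple_anti (introT andP (conj a c))) (ple_anti (introT andP (conj b e))).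
Qed.

Lemma int_le_trans (S : finPoset) : transitive (@int_le S).
Proof.
move=> b a c; rewrite /int_le => /andP[h1 h2] /andP[h3 h4].
by rewrite (ple_trans h1 h3) (ple_trans h2 h4).
Qed.

Definition intP (S : finPoset) : finPoset :=
  @FinPoset (int_car S) (@int_le S)
    (@int_le_refl S) (@int_le_anti S) (@int_le_trans S).

Section Metrics.
Variable R : realType.
Local Open Scope ereal_scope.

Definition aug_d (P : finPoset) (d : P -> P -> \bar R) (a b : augP P) : \bar R :=
  match a, b with
  | Some x, Some y => d x y
  | None, None => 0
  | _, _ => +oo
  end.

Definition int_d (S : finPoset) (d : S -> S -> \bar R) (a b : intP S) : \bar R :=
  maxe (d (val a).1 (val b).1) (d (val a).2 (val b).2).

Definition is_metric (S : finPoset) (d : S -> S -> \bar R) :=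
  [/\ forall x y, d x y = 0 <-> x = y,
      forall x y, d x y = d y x
    & forall x y z, d x z <= d x y + d y z].

End Metrics.

(* S-modules: functors S -> vect, as dimensions + matrices.             *)
(* Row-vector convention: M(x <= y) acts by v |-> v *m pmap M x y.      *)
(* pmap M x y is only meaningful when x <= y.                           *)
Section Modules.
Variable F : fieldType.

Record pmod (S : finPoset) := PMod {
  pdim : S -> nat;
  pmap : forall x y : S, 'M[F]_(pdim x, pdim y) }.

Definition is_pmod (S : finPoset) (M : pmod S) :=
  (forall x : S, pmap M x x = 1%:M) /\
  (forall x y z : S, ple x y -> ple y z ->
     pmap M x z = pmap M x y *m pmap M y z).

Definition pmod_iso (S : finPoset) (M N : pmod S) :=
  exists (phi : forall x, 'M[F]_(pdim M x, pdim N x))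
         (psi : forall x, 'M[F]_(pdim N x, pdim M x)),
    [/\ forall x, phi x *m psi x = 1%:M,
        forall x, psi x *m phi x = 1%:M
      & forall x y, ple x y -> pmap M x y *m phi y = phi x *m pmap N x y].

Definition pullback (Q S : finPoset) (g : Q -> S) (M : pmod S) : pmod Q :=
  @PMod Q (fun u => pdim M (g u)) (fun u v => pmap M (g u) (g v)).

Definition aug_dim (P : finPoset) (M : pmod P) (a : augP P) : nat :=
  if a is Some x then pdim M x else 0%N.

Definition aug_map (P : finPoset) (M : pmod P) (a b : augP P) :
    'M[F]_(aug_dim M a, aug_dim M b) :=
  match a as a0, b as b0 return 'M[F]_(aug_dim M a0, aug_dim M b0) with
  | Some x, Some y => pmap M x y
  | _, _ => 0
  end.

Definition aug_mod (P : finPoset) (M : pmod P) : pmod (augP P) :=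
  @PMod (augP P) (aug_dim M) (aug_map M).

(* Kernel module K(M) over Int P-bar: K(M)(x,y) = ker M-bar(x <= y)
   (a chosen basis of the left kernel), structure maps = restrictions
   of M-bar(x1 <= x2). *)
Definition kmat (P : finPoset) (M : pmod P) (p : intP (augP P)) :=
  pmap (aug_mod M) (val p).1 (val p).2.

Definition kdim (P : finPoset) (M : pmod P) (p : intP (augP P)) : nat :=
  \rank (kermx (kmat M p)).

Definition kbasis (P : finPoset) (M : pmod P) (p : intP (augP P)) :
    'M[F]_(kdim M p, aug_dim M (val p).1) :=
  row_base (kermx (kmat M p)).

Definition kermod (P : finPoset) (M : pmod P) : pmod (intP (augP P)) :=
  @PMod (intP (augP P)) (kdim M)
    (fun p q => kbasis M p *m pmap (aug_mod M) (val p).1 (val q).1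
                  *m pinvmx (kbasis M q)).

Variable R : realType.
Local Open Scope ereal_scope.

Definition coupling_cost (Q S : finPoset) (d : S -> S -> \bar R)
    (f h : Q -> S) : \bar R :=
  \big[maxe/0]_(q : Q) d (f q) (h q).

Definition dGT (S : finPoset) (d : S -> S -> \bar R) (M N : pmod S) : \bar R :=
  ereal_inf [set c | exists (Q : finPoset) (f : Q -> S) (g : S -> Q)
                            (h : Q -> S) (i : S -> Q) (G : pmod Q),
     [/\ galois_ins f g, galois_ins h i, is_pmod G,
         pmod_iso (pullback g G) M /\ pmod_iso (pullback i G) N
       & c = coupling_cost d f h]].

(* A projective E = (+)_{j} k[S]_{s_j} is given by the sequence s of     *)
(* its summand labels; E(z) is the span of the e_j with s_j <= z inside  *)
(* F^(size s), i.e. the row space of diag_at s z; structure maps are the *)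
(* inclusions.  A morphism (+) k[S]_{s_j} -> (+) k[S]_{t_k} is its       *)
(* matrix Mat = [a_{jk}] with a_{jk} = 0 unless t_k <= s_j.              *)
(* The augmentation E_0 -> M is given (Yoneda) by vectors m_j in M(s_j). *)
Definition lab (S : finPoset) (s : seq S) (j : 'I_(size s)) : S :=
  tnth (in_tuple s) j.

Definition diag_at (S : finPoset) (s : seq S) (z : S) : 'M[F]_(size s) :=
  diag_mx (\row_j (ple (lab j) z)%:R).

Record presol (S : finPoset) (M : pmod S) := PRes {
  rE : nat -> seq S;
  rd : forall i, 'M[F]_(size (rE i.+1), size (rE i));
  reps : forall j : 'I_(size (rE 0)), 'rV[F]_(pdim M (lab j)) }.
Arguments reps [S M] p j.
Arguments rd [S M] p i.
Arguments rE [S M] p i.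

Definition eps_at (S : finPoset) (M : pmod S) (E : presol M) (z : S) :
    'M[F]_(size (rE E 0), pdim M z) :=
  \matrix_(j, k) (if ple (lab j) z then (reps E j *m pmap M (lab j) z) ord0 k
                  else 0%R).

Definition is_resolution (S : finPoset) (M : pmod S) (E : presol M) :=
  [/\ (* each differential is a morphism of projectives *)
      forall i (j : 'I_(size (rE E i.+1))) (k : 'I_(size (rE E i))),
        rd E i j k != 0%R -> ple (lab k) (lab j),
      forall z, row_full (eps_at E z),
      (* exactness at E_0 *)
      forall z, (diag_at (rE E 1) z *m rd E 0
                  == diag_at (rE E 0) z :&: kermx (eps_at E z))%MS
    & (* exactness at E_{i+1} *)
      forall i z, (diag_at (rE E i.+2) z *m rd E i.+1
                  == diag_at (rE E i.+1) z :&: kermx (rd E i))%MS].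

Definition is_matching (S : finPoset) (M N : pmod S) (E : presol M) (G : presol N)
    (B : forall i, 'I_(size (rE E i)) -> 'I_(size (rE G i))) :=
  (forall i, bijective (B i)) /\
  (forall i (j' : 'I_(size (rE E i.+1))) (j : 'I_(size (rE E i))),
      rd E i j' j = rd G i (B i.+1 j') (B i j)).

Definition matching_cost (S : finPoset) (d : S -> S -> \bar R) (M N : pmod S)
    (E : presol M) (G : presol N)
    (B : forall i, 'I_(size (rE E i)) -> 'I_(size (rE G i))) : \bar R :=
  ereal_sup ([set 0] `|`
    [set c | exists i (j : 'I_(size (rE E i))), c = d (lab j) (lab (B i j))]).

Definition distR (S : finPoset) (d : S -> S -> \bar R) (M N : pmod S)
    (E : presol M) (G : presol N) : \bar R :=
  ereal_inf [set c | exists B : forall i, 'I_(size (rE E i)) -> 'I_(size (rE G i)),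
     is_matching B /\ c = matching_cost d B].

Definition distB (S : finPoset) (d : S -> S -> \bar R) (M N : pmod S) : \bar R :=
  ereal_inf [set c | exists (E : presol M) (G : presol N),
     [/\ is_resolution E, is_resolution G,
         (forall i, size (rE E i) = size (rE G i))
       & c = distR d E G]].

End Modules.

(* Main.v *)
Require Import Defs.
From HB Require Import structures.
From mathcomp Require Import all_boot all_order all_algebra.
From mathcomp Require Import classical_sets reals constructive_ereal ereal.

Set Implicit Arguments.
Unset Strict Implicit.
Unset Printing Implicit Defensive.
Import Order.TTheory GRing.Theory Num.Theory.
Local Open Scope ring_scope.

Section PartB.
Variable F : fieldType.

Definition kermod0 (P : finPoset) (X : pmod F (augP P)) : pmod F (Defs.intP (augP P)) :=
  @PMod F (Defs.intP (augP P)) (fun p => \rank (kermx (Defs.pmap X (val p).1 (val p).2)))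
    (fun p q => row_base (kermx (Defs.pmap X (val p).1 (val p).2)) *m Defs.pmap X (val p).1 (val q).1
                  *m pinvmx (row_base (kermx (Defs.pmap X (val q).1 (val q).2)))).

Lemma thin_eq m (A B : 'M[F]_(m,0)) : A = B.
Proof. by rewrite (thinmx0 A) (thinmx0 B). Qed.

Lemma ker_transport m n m' n' (A : 'M[F]_(m,n)) (B : 'M_(m',n')) (pa : 'M_(m,m'))
   (pb : 'M_(n,n')) :
  A *m pb = pa *m B -> (row_base (kermx A) *m pa <= row_base (kermx B))%MS.
Proof.
move=> e; rewrite eq_row_base; apply/sub_kermxP.
have h0 : row_base (kermx A) *m A = 0 by apply/sub_kermxP; rewrite eq_row_base.
by rewrite -mulmxA -e mulmxA h0 mul0mx.
Qed.

Lemma mulmx_pinv_free m n (A : 'M[F]_(m,n)) : row_free A -> A *m pinvmx A = 1%:M.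
Proof. by move=> fA; apply: (row_free_inj fA); rewrite mulmxKpV ?submx_refl // mul1mx. Qed.

Lemma pinv_cancel m1 m2 n p q (U : 'M[F]_(m1,n)) (B : 'M_(m2,n)) (Y : 'M_(n,p))
  (Z : 'M_(p,q)) : (U <= B)%MS -> U *m pinvmx B *m (B *m Y *m Z) = U *m Y *m Z.
Proof. by move=> h; rewrite (mulmxA _ (B *m Y) Z) (mulmxA _ B Y) mulmxKpV. Qed.

Lemma kermod0_sub P (X : pmod F (augP P)) (HX : is_pmod X) (p q : Defs.intP (augP P)) :
  ple p q ->
  (row_base (kermx (Defs.pmap X (val p).1 (val p).2)) *m Defs.pmap X (val p).1 (val q).1
     <= row_base (kermx (Defs.pmap X (val q).1 (val q).2)))%MS.
Proof.
move=> /andP [h1 h2]; apply: ker_transport.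
case: HX => _ HX.
by rewrite -(HX _ _ _ h1 (valP q)) (HX _ _ _ (valP p) h2).
Qed.

Lemma kermod0_pmod P (X : pmod F (augP P)) : is_pmod X -> is_pmod (kermod0 X).
Proof.
move=> HX; split.
  move=> p /=; case: (HX) => H1 _; rewrite H1 mulmx1.
  apply: mulmx_pinv_free; exact: row_base_free.
move=> p q r hpq hqr /=.
rewrite pinv_cancel; last exact: kermod0_sub.
case: (HX) => _ H2; congr (_ *m _); rewrite -mulmxA -H2 //.
  by case/andP: hpq.
by case/andP: hqr.
Qed.

Lemma kermod0_iso P (X Y : pmod F (augP P)) :
  is_pmod X -> pmod_iso X Y -> pmod_iso (kermod0 X) (kermod0 Y).
Proof.
move=> HX [phi [psi [e1 e2 e3]]].
pose kbX (p : Defs.intP (augP P)) := row_base (kermx (Defs.pmap X (val p).1 (val p).2)).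
pose kbY (p : Defs.intP (augP P)) := row_base (kermx (Defs.pmap Y (val p).1 (val p).2)).
have sXY p : (kbX p *m phi (val p).1 <= kbY p)%MS.
  by apply: ker_transport; apply: e3; exact: (valP p).
have sYX p : (kbY p *m psi (val p).1 <= kbX p)%MS.
  apply: (ker_transport (pb := psi (val p).2)).
  have hp : ple (val p).1 (val p).2 := valP p.
  symmetry; rewrite -[psi _ *m _]mulmx1 -(e1 (val p).2) mulmxA -(mulmxA (psi _)) e3 //.
  by rewrite mulmxA e2 mul1mx.
exists (fun p => kbX p *m phi (val p).1 *m pinvmx (kbY p)).
exists (fun p => kbY p *m psi (val p).1 *m pinvmx (kbX p)).
split.
- move=> p; rewrite pinv_cancel; last exact: sXY.
  rewrite -(mulmxA (kbX p *m phi (val p).1)) -(mulmxA (kbX p)).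
  rewrite (mulmxA (phi _)) e1 mul1mx.
  apply: mulmx_pinv_free; exact: row_base_free.
- move=> p; rewrite pinv_cancel; last exact: sYX.
  rewrite -(mulmxA (kbY p *m psi (val p).1)) -(mulmxA (kbY p)).
  rewrite (mulmxA (psi _)) e2 mul1mx.
  apply: mulmx_pinv_free; exact: row_base_free.
- move=> p q hpq /=.
  rewrite pinv_cancel; last exact: kermod0_sub.
  rewrite pinv_cancel; last exact: sXY.
  congr (_ *m _).
  rewrite -!mulmxA e3 //.
  by case/andP: hpq.
Qed.

Definition augmap (Q S : finPoset) (g : S -> Q) (a : augP S) : augP Q := omap g a.

Lemma augmap_mono (Q S : finPoset) (g : S -> Q) :
  monotone g -> @monotone (augP S) (augP Q) (augmap g).
Proof. by move=> hg [x|] [y|] //= /hg. Qed.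

Lemma aug_pmod P (G : pmod F P) : is_pmod G -> is_pmod (aug_mod G).
Proof.
case=> H1 H2; split.
  by case=> [x|] /=; [exact: H1 | exact: thin_eq].
case=> [x|] [y|] [z|] //= hxy hyz; try exact: H2; exact: thin_eq.
Qed.

Lemma pull_pmod (Q S : finPoset) (g : S -> Q) (X : pmod F Q) :
  monotone g -> is_pmod X -> is_pmod (pullback g X).
Proof.
move=> hg [H1 H2]; split => /=; first by move=> x; exact: H1.
by move=> x y z hxy hyz; apply: H2; apply: hg.
Qed.

Lemma aug_iso (Q S : finPoset) (g : S -> Q) (G : pmod F Q) (M : pmod F S) :
  pmod_iso (pullback g G) M ->
  pmod_iso (pullback (augmap g) (aug_mod G)) (aug_mod M).
Proof.
move=> [phi [psi [e1 e2 e3]]].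
exists (fun a => match a return 'M_(aug_dim G (augmap g a), aug_dim M a) with
                 | Some x => phi x | None => 0 end).
exists (fun a => match a return 'M_(aug_dim M a, aug_dim G (augmap g a)) with
                 | Some x => psi x | None => 0 end).
split.
- by case=> [x|]; [exact: e1 | exact: thin_eq].
- by case=> [x|]; [exact: e2 | exact: thin_eq].
- case=> [x|] [y|] //= hxy; try exact: e3; exact: thin_eq.
Qed.

Definition intmap (Q S : finPoset) (f : Q -> S) (hf : monotone f)
   (p : Defs.intP (augP Q)) : Defs.intP (augP S) :=
  exist (fun x : augP S * augP S => ple x.1 x.2)
    (augmap f (val p).1, augmap f (val p).2) (augmap_mono hf (valP p)).

Lemma int_galois (Q S : finPoset) (f : Q -> S) (g : S -> Q) (hf : monotone f)
  (hg : monotone g) : galois_ins f g -> galois_ins (intmap hf) (intmap hg).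
Proof.
case=> _ _ adj fg.
have aadj (a : augP Q) (b : augP S) : aug_le (augmap f a) b = aug_le a (augmap g b).
  by case: a => [x|]; case: b => [y|] //=; exact: adj.
split.
- move=> u v /andP [h1 h2]; apply/andP; split; exact: augmap_mono.
- move=> u v /andP [h1 h2]; apply/andP; split; exact: augmap_mono.
- by move=> u x; rewrite /= /int_le /= !aadj.
- move=> x; apply: val_inj => /=.
  by case: x => [[a b] hab] /=; case: a {hab} => [a|]; case: b => [b|] //=; rewrite !fg.
Qed.


Lemma bigmax0_ge0 (R : realType) (I : finType) (G : I -> \bar R) :
  (0 <= \big[maxe/0%E]_(i : I) G i)%E.
Proof. by elim/big_rec: _ => // i x _ hx; rewrite le_max hx orbT. Qed.

Lemma int_cost (R : realType) (Q S : finPoset) (d : S -> S -> \bar R) (f h : Q -> S)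
  (hf : monotone f) (hh : monotone h) :
  (coupling_cost (int_d (aug_d d)) (intmap hf) (intmap hh) <= coupling_cost d f h)%E.
Proof.
apply/bigmax_leP; split; first exact: bigmax0_ge0.
have H (a : augP Q) : (aug_d d (augmap f a) (augmap h a) <= coupling_cost d f h)%E.
  case: a => [x|] /=; last exact: bigmax0_ge0.
  exact: (le_bigmax 0%E (fun q => d (f q) (h q)) x).
by move=> q _; rewrite /int_d /= ge_max !H.
Qed.

Lemma dGT_ker (R : realType) (P : finPoset) (d : P -> P -> \bar R) (M N : pmod F P) :
  (dGT (int_d (aug_d d)) (kermod M) (kermod N) <= dGT d M N)%E.
Proof.
apply: le_ereal_inf_tmp => c [Q [f [g [h [i [G [gfg ghi HG [isoM isoN] ->]]]]]]].
have [hf hg _ _] := gfg.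
have [hh hi _ _] := ghi.
apply: ge_ereal_inf; exists (coupling_cost (int_d (aug_d d)) (intmap hf) (intmap hh)); last exact: int_cost.
exists (Defs.intP (augP Q)), (intmap hf), (intmap hg), (intmap hh), (intmap hi), (kermod G).
split.
- exact: int_galois.
- exact: int_galois.
- exact: kermod0_pmod (aug_pmod HG).
- split.
  + exact: kermod0_iso (pull_pmod (augmap_mono hg) (aug_pmod HG)) (aug_iso isoM).
  + exact: kermod0_iso (pull_pmod (augmap_mono hi) (aug_pmod HG)) (aug_iso isoN).
- by [].
Qed.

End PartB.

Section PartA.
Variable F : fieldType.

Section Construction.
Variable Q : finPoset.

Definition lbl (n : nat) : seq Q := [seq x.1 | x <- enum {: Q * 'I_n}].
Lemma size_lbl n : size (lbl n) = #|{: Q * 'I_n}|.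
Proof. by rewrite size_map -cardE. Qed.
Definition eidx n (j : 'I_(size (lbl n))) : Q * 'I_n :=
  enum_val (cast_ord (size_lbl n) j).

Lemma lab_eidx n (j : 'I_(size (lbl n))) : lab j = (eidx j).1.
Proof.
have hj : (j < size (enum {: Q * 'I_n}))%N by rewrite -cardE -(size_lbl n) ltn_ord.
rewrite /lab (tnth_nth (eidx j).1) /= (nth_map (eidx j)) //.
by rewrite /eidx /enum_val /=; congr fst; exact: set_nth_default.
Qed.

Lemma eidx_surj n (x : Q * 'I_n) : exists j : 'I_(size (lbl n)), eidx j = x.
Proof.
exists (cast_ord (esym (size_lbl n)) (enum_rank x)).
by rewrite /eidx cast_ordKV enum_rankK.
Qed.

Lemma mul_diag_row (s : seq Q) z m (A : 'M[F]_(size s, m)) j :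
  row j (diag_at F s z *m A) = (ple (lab j) z)%:R *: row j A.
Proof. by apply/rowP=> k; rewrite /diag_at mul_diag_mx !mxE. Qed.

Lemma diag_at_mul (s : seq Q) z w : ple z w ->
  diag_at F s z *m diag_at F s w = diag_at F s z :> 'M[F]_(size s).
Proof.
move=> hzw; apply/matrixP => i j; rewrite /diag_at mul_mx_diag !mxE.
case: (eqVneq i j) => [->|ne]; rewrite ?mulr0n ?mul0r ?mulr1n //.
by case hj: (ple (lab j) z); [rewrite (ple_trans hj hzw) mulr1 | rewrite mul0r].
Qed.

Lemma diag_proj (s : seq Q) z m (A : 'M[F]_(m, size s)) :
  (A <= diag_at F s z)%MS -> A *m diag_at F s z = A.
Proof. by case/submxP => X ->; rewrite -mulmxA diag_at_mul // ple_refl. Qed.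

Lemma diag_mono (s : seq Q) z w : ple z w -> (diag_at F s z <= diag_at F s w)%MS.
Proof. by move=> h; rewrite -(diag_at_mul s h) submxMl. Qed.

Definition dstep (s : seq Q) (K : Q -> 'M[F]_(size s)) :
  'M[F]_(size (lbl (size s)), size s) :=
  \matrix_(j, c) K (eidx j).1 (eidx j).2 c.

Lemma row_dstep s K j : row j (@dstep s K) = row (eidx j).2 (K (eidx j).1).
Proof. by apply/rowP => c; rewrite !mxE. Qed.

Lemma dstep_mor s (K : Q -> 'M[F]_(size s)) :
  (forall z, (K z <= diag_at F s z)%MS) ->
  forall j c, dstep K j c != 0 -> ple (lab c) (lab j).
Proof.
move=> Kd j c; rewrite mxE -(diag_proj (Kd _)) /diag_at mul_mx_diag !mxE lab_eidx.
by case: (ple (lab c) _) => //; rewrite mulr0 eqxx.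
Qed.

Lemma dstep_im s (K : Q -> 'M[F]_(size s)) :
  (forall z w, ple z w -> (K z <= K w)%MS) ->
  forall z, (diag_at F (lbl (size s)) z *m dstep K == K z)%MS.
Proof.
move=> Km z; apply/andP; split.
  apply/row_subP => j; rewrite mul_diag_row row_dstep lab_eidx.
  case h: ple; last by rewrite scale0r sub0mx.
  by rewrite scale1r (submx_trans (row_sub _ _)) // Km.
apply/row_subP => k; have [j ej] := eidx_surj (z, k).
have -> : row k (K z) = row j (diag_at F (lbl (size s)) z *m dstep K).
  by rewrite mul_diag_row row_dstep lab_eidx ej /= ple_refl scale1r.
exact: row_sub.
Qed.

End Construction.

Section Resol.
Variables (Q : finPoset) (G : pmod F Q).
Hypothesis HG : is_pmod G.

Definition mG := \max_(z : Q) pdim G z.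
Definition s0 := lbl Q mG.
Definition reps0 (j : 'I_(size s0)) : 'rV[F]_(pdim G (lab j)) :=
  \row_(l < pdim G (lab j)) ((l : nat) == (eidx j).2 :> nat)%:R.
Definition epsm (s : seq Q) (r : forall j : 'I_(size s), 'rV[F]_(pdim G (lab j)))
  (z : Q) : 'M[F]_(size s, pdim G z) :=
  \matrix_(j, k) (if ple (lab j) z then (r j *m Defs.pmap G (lab j) z) ord0 k else 0).
Definition K0 z := (diag_at F s0 z :&: kermx (epsm reps0 z))%MS.
Definition State := {s : seq Q & Q -> 'M[F]_(size s)}.
Definition nextK s (K : Q -> 'M[F]_(size s)) : Q -> 'M[F]_(size (lbl Q (size s))) :=
  fun z => (diag_at F (lbl Q (size s)) z :&: kermx (dstep K))%MS.
Definition stepst (st : State) : State :=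
  existT _ (lbl Q (size (tag st))) (nextK (tagged st)).
Fixpoint stt i : State := if i is i'.+1 then stepst (stt i') else existT _ s0 K0.
Definition resG : presol G :=
  @PRes F Q G (fun i => tag (stt i)) (fun i => dstep (tagged (stt i))) reps0.

Lemma eps_row s r z j : row j (@epsm s r z) =
  if ple (lab j) z then r j *m Defs.pmap G (lab j) z else 0.
Proof. by apply/rowP => k; rewrite !mxE; case: ple; rewrite ?mxE. Qed.

Lemma diag_eps s r z w : ple z w ->
  diag_at F s z *m @epsm s r w = epsm r z *m Defs.pmap G z w.
Proof.
move=> hzw; apply/row_matrixP => j; rewrite mul_diag_row row_mul !eps_row.
case h: (ple (lab j) z).
  by rewrite (ple_trans h hzw) scale1r -mulmxA -(HG.2 _ _ _ h hzw).
by rewrite scale0r mul0mx.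
Qed.

Lemma K0_mono z w : ple z w -> (K0 z <= K0 w)%MS.
Proof.
move=> h; rewrite sub_capmx; apply/andP; split.
  exact: submx_trans (capmxSl _ _) (diag_mono _ h).
apply/sub_kermxP.
have hd : (K0 z <= diag_at F s0 z)%MS by exact: capmxSl.
have h0 : K0 z *m epsm reps0 z = 0 by apply/sub_kermxP; exact: capmxSr.
by rewrite -(diag_proj hd) -mulmxA diag_eps // mulmxA h0 mul0mx.
Qed.

Lemma stt_inv i :
  (forall z w, ple z w -> (tagged (stt i) z <= tagged (stt i) w)%MS) /\
  (forall z, (tagged (stt i) z <= diag_at F (tag (stt i)) z)%MS).
Proof.
case: i => [|i] /=.
  by split; [exact: K0_mono | move=> z; exact: capmxSl].
split => [z w h|z]; last exact: capmxSl.
by rewrite sub_capmx (submx_trans (capmxSl _ _) (diag_mono _ h)) capmxSr.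
Qed.

Lemma resG_res : is_resolution resG.
Proof.
split.
- move=> i j k; exact: dstep_mor (stt_inv i).2 j k.
- move=> z; rewrite -sub1mx; apply/row_subP => k.
  have hk : (k < mG)%N := leq_trans (ltn_ord k) (@leq_bigmax _ (fun z : Q => pdim G z) z).
  have [j ej] := eidx_surj (z, Ordinal hk).
  have hjz : lab j = z by rewrite lab_eidx ej.
  have gen : forall w (r : 'rV[F]_(pdim G w)), w = z ->
      (forall l, r 0 l = ((l : nat) == k)%:R) -> r *m Defs.pmap G w z = row k 1%:M.
    move=> w r e hr; subst w; rewrite HG.1 mulmx1; apply/rowP => l.
    by rewrite hr !mxE eq_sym.
  have -> : row k 1%:M = row j (epsm reps0 z).
    rewrite eps_row (_ : ple (lab j) z = true); last by rewrite hjz ple_refl.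
    symmetry; apply: gen => // l.
    by rewrite !mxE ej.
  exact: row_sub.
- move=> z; exact: dstep_im (stt_inv 0).1 z.
- move=> i z; exact: dstep_im (stt_inv i.+1).1 z.
Qed.

End Resol.

Lemma eps_at_row (S : finPoset) (M : pmod F S) (E : presol M) z j :
  row j (eps_at E z) =
  if ple (lab j) z then reps (p:=E) j *m Defs.pmap M (lab j) z else 0.
Proof. by apply/rowP => k; rewrite !mxE; case: ple; rewrite ?mxE. Qed.

Lemma row_cast m m' n (e : m = m') (A : 'M[F]_(m,n)) j :
  row j (castmx (e, erefl n) A) = row (cast_ord (esym e) j) A.
Proof. by apply/rowP => k; rewrite !mxE castmxE cast_ord_id. Qed.

Lemma exact_mul n0 n1 p q (D1 : 'M[F]_n1) (d : 'M_(n1,n0)) (D0 : 'M_n0)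
  (X : 'M_(n0,p)) (P : 'M_(p,q)) (P' : 'M_(q,p)) :
  P *m P' = 1%:M -> (D1 *m d == D0 :&: kermx X)%MS ->
  (D1 *m d == D0 :&: kermx (X *m P))%MS.
Proof.
move=> hP /andP [h1 h2].
have k1 : (kermx X <= kermx (X *m P))%MS.
  by apply/sub_kermxP; rewrite mulmxA mulmx_ker mul0mx.
have k2 : (kermx (X *m P) <= kermx X)%MS.
  apply/sub_kermxP.
  have h0 := mulmx_ker (X *m P).
  by rewrite -[kermx _ *m X]mulmx1 -hP mulmxA -(mulmxA _ X P) h0 mul0mx.
apply/andP; split.
  exact: submx_trans h1 (capmxS (submx_refl _) k1).
exact: submx_trans (capmxS (submx_refl _) k2) h2.
Qed.

Lemma cast_exact0 n0 n0' n1 n1' p (e0 : n0 = n0') (e1 : n1 = n1')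
  (D1 : 'M[F]_n1) (D0 : 'M_n0) (d : 'M_(n1,n0)) (X : 'M_(n0,p)) :
  (D1 *m d == D0 :&: kermx X)%MS ->
  (castmx (e1,e1) D1 *m castmx (e1,e0) d ==
     castmx (e0,e0) D0 :&: kermx (castmx (e0, erefl p) X))%MS.
Proof. by case: n0' / e0; case: n1' / e1; rewrite !castmx_id. Qed.

Lemma cast_exact1 n0 n0' n1 n1' n2 n2' (e0 : n0 = n0') (e1 : n1 = n1') (e2 : n2 = n2')
  (D2 : 'M[F]_n2) (D1 : 'M_n1) (d1 : 'M_(n2,n1)) (d0 : 'M_(n1,n0)) :
  (D2 *m d1 == D1 :&: kermx d0)%MS ->
  (castmx (e2,e2) D2 *m castmx (e2,e1) d1 ==
     castmx (e1,e1) D1 :&: kermx (castmx (e1, e0) d0))%MS.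
Proof. by case: n0' / e0; case: n1' / e1; case: n2' / e2; rewrite !castmx_id. Qed.

Lemma row_full_mul m n p (A : 'M[F]_(m,n)) (P : 'M_(n,p)) (P' : 'M_(p,n)) :
  P' *m P = 1%:M -> row_full A -> row_full (A *m P).
Proof.
move=> hP; rewrite -!sub1mx => /submxP [X hX].
apply/submxP; exists (P' *m X).
by rewrite mulmxA -(mulmxA P') -hX mulmx1 hP.
Qed.

Lemma row_full_cast m m' n (e : m = m') (A : 'M[F]_(m,n)) :
  row_full A -> row_full (castmx (e, erefl n) A).
Proof. by case: m' / e; rewrite castmx_id. Qed.

Section Transport.
Variables (Q S : finPoset) (G : pmod F Q) (M : pmod F S) (f : Q -> S) (g : S -> Q).
Hypotheses (HG : is_pmod G) (gi : galois_ins f g).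
Variable phi : forall x : S, 'M[F]_(pdim G (g x), pdim M x).
Variable psi : forall x : S, 'M[F]_(pdim M x, pdim G (g x)).
Hypotheses (e1 : forall x, phi x *m psi x = 1%:M) (e2 : forall x, psi x *m phi x = 1%:M)
  (e3 : forall x y, ple x y -> Defs.pmap G (g x) (g y) *m phi y = phi x *m Defs.pmap M x y).
Variable E : presol G.

Definition tpres : presol M := @PRes F S M (fun i => map f (rE E i))
  (fun i => castmx (esym (size_map f (rE E i.+1)), esym (size_map f (rE E i))) (rd E i))
  (fun j => reps (p:=E) (cast_ord (size_map f (rE E 0)) j) *m
     Defs.pmap G (lab (cast_ord (size_map f (rE E 0)) j)) (g (lab j)) *m phi (lab j)).

Lemma lab_map (s : seq Q) (e : size (map f s) = size s) (j : 'I_(size (map f s))) :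
  lab j = f (lab (cast_ord e j)).
Proof.
have hj : (j < size s)%N by rewrite -e ltn_ord.
rewrite /lab (tnth_nth (f (tnth (in_tuple s) (cast_ord e j)))) /=.
rewrite (nth_map (tnth (in_tuple s) (cast_ord e j))) //.
by congr f; rewrite [RHS](tnth_nth (tnth (in_tuple s) (cast_ord e j))).
Qed.

Lemma adj u x : ple (f u) x = ple u (g x).
Proof. by case: gi. Qed.

Lemma diag_map (s : seq Q) z :
  diag_at F (map f s) z =
  castmx (esym (size_map f s), esym (size_map f s)) (diag_at F s (g z)).
Proof.
apply/matrixP => i j; rewrite castmxE /diag_at !mxE.
rewrite (lab_map (esym (esym (size_map f s))) i) adj.
by rewrite (inj_eq (@cast_ord_inj _ _ _)).
Qed.

Lemma eps_map z : eps_at tpres z =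
  castmx (esym (size_map f (rE E 0)), erefl (pdim G (g z))) (eps_at E (g z)) *m phi z.
Proof.
apply/row_matrixP => j; rewrite row_mul row_cast eps_at_row eps_at_row.
have -> : cast_ord (esym (esym (size_map f (rE E 0)))) j = cast_ord (size_map f (rE E 0)) j.
  exact: val_inj.
set j0 := cast_ord (size_map f (rE E 0)) j.
have hl : lab j = f (lab j0) by exact: lab_map.
have hc : ple (lab j) z = ple (lab j0) (g z) by rewrite hl adj.
rewrite hc; case h: (ple (lab j0) (g z)); last by rewrite mul0mx.
have hz : ple (lab j) z by rewrite hc.
have h1 : ple (lab j0) (g (lab j)) by rewrite -adj hl ple_refl.
have h2 : ple (g (lab j)) (g z) by case: gi => _ hg _ _; exact: hg.
rewrite /= -/j0 -(mulmxA _ (phi _)) -e3 // mulmxA.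
by rewrite -(mulmxA (reps _)) -(HG.2 _ _ _ h1 h2).
Qed.

Lemma tpres_res : is_resolution E -> is_resolution tpres.
Proof.
case=> H1 H2 H3 H4; split.
- move=> i j k; rewrite castmxE => /H1.
  rewrite (lab_map (esym (esym (size_map f (rE E i)))) k).
  rewrite (lab_map (esym (esym (size_map f (rE E i.+1)))) j).
  by case: gi => hf _ _ _; exact: hf.
- move=> z; rewrite eps_map; apply: (row_full_mul (e2 z)).
  exact/row_full_cast/H2.
- move=> z; rewrite /= !diag_map eps_map; apply: (exact_mul (e1 z)).
  exact: cast_exact0 (H3 (g z)).
- move=> i z; rewrite /= !diag_map; exact: cast_exact1 (H4 i (g z)).
Qed.

End Transport.

Lemma distB_le_dGT (R : realType) (S : finPoset) (d : S -> S -> \bar R) (M N : pmod F S) :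
  (distB d M N <= dGT d M N)%E.
Proof.
apply: le_ereal_inf_tmp => c [Q [f [g [h [i [G [gfg ghi HG [isoM isoN] ->]]]]]]].
case: isoM => phi [psi [a1 a2 a3]]; case: isoN => phi' [psi' [b1 b2 b3]].
pose E := resG G.
pose EM := @tpres _ _ _ _ f g phi E.
pose EN := @tpres _ _ _ _ h i phi' E.
have rE0 : is_resolution E by exact: resG_res.
have rM : is_resolution EM by exact: (tpres_res HG gfg a1 a2 a3).
have rN : is_resolution EN by exact: (tpres_res HG ghi b1 b2 b3).
apply: ge_ereal_inf; exists (distR d EM EN).
  by exists EM, EN; split => // k; rewrite /= !size_map.
pose B k (j : 'I_(size (rE EM k))) : 'I_(size (rE EN k)) :=
  cast_ord (esym (size_map h (rE E k))) (cast_ord (size_map f (rE E k)) j).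
apply: ge_ereal_inf; exists (matching_cost d B).
  exists B; split => //; split.
  - move=> k; exists (fun j => cast_ord (esym (size_map f (rE E k))) (cast_ord (size_map h (rE E k)) j)).
      by move=> j; apply: val_inj.
    by move=> j; apply: val_inj.
  - move=> k j' j /=; rewrite !castmxE; congr (rd E k _ _); exact: val_inj.
apply: ge_ereal_sup => y [->|[k [j ->]]]; first exact: bigmax0_ge0.
rewrite (lab_map (size_map f (rE E k)) j) (lab_map (size_map h (rE E k)) (B k j)).
have -> : cast_ord (size_map h (rE E k)) (B k j) = cast_ord (size_map f (rE E k)) j.
  exact: val_inj.
exact: (le_bigmax 0%E (fun q => d (f q) (h q))).
Qed.

End PartA.

Theorem theorem6p14 (R : realType) (F : fieldType) (P : finPoset)
    (d : P -> P -> \bar R)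
    (d_fin : forall x y : P, d x y \is a fin_num)
    (d_metric : is_metric d)
    (M N : pmod F P) (HM : is_pmod M) (HN : is_pmod N) :
  (distB (int_d (aug_d d)) (kermod M) (kermod N)
     <= dGT (int_d (aug_d d)) (kermod M) (kermod N)
     <= dGT d M N)%E.
Proof.
apply/andP; split; [exact: distB_le_dGT | exact: dGT_ker].
Qed.
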